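(* Let $t\geq 4$ be an integer and let $H$ be a $3$-graph on $t$ vertices with at least $\binom{t-1}{3}+\binom{t-2}{2}+2$ edges. Then $H$ is not $\lambda$-perfect.
   Context: For a $3$-graph $G$ on vertex set $[n]$ and $\vec x\in\Delta=\{\vec x\in[0,1]^n:\sum_i x_i=1\}$, put $\lambda(G,\vec x)=\sum_{e\in E(G)}\prod_{i\in e}x_i$ and $\lambda(G)=\max_{\vec x\in\Delta}\lambda(G,\vec x)$ (the Lagrangian). $G$ is $F$-free if it contains no subgraph isomorphic to $F$. The Lagrangian density is $\pi_\lambda(F)=\sup\{3!\,\lambda(G): G\text{ is an }F\text{-free }3\text{-graph}\}$. $K_m^3$ is the complete $3$-graph on $m$ vertices. A $3$-graph $H$ on $t$ vertices is $\lambda$-perfect if $\pi_\lambda(H)=3!\,\lambda(K_{t-1}^3)$. *)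

(* Defs.v *)
From mathcomp Require Import all_boot all_order all_algebra.
From mathcomp Require Import classical_sets reals.
Set Implicit Arguments. Unset Strict Implicit. Unset Printing Implicit Defensive.
Import Order.TTheory GRing.Theory Num.Theory.
Local Open Scope ring_scope.
Local Open Scope classical_set_scope.

Definition is3graph (n : nat) (G : {set {set 'I_n}}) : Prop :=
  forall e, e \in G -> #|e| = 3%N.

Definition contains (t n : nat) (F : {set {set 'I_t}}) (G : {set {set 'I_n}}) : Prop :=
  exists f : 'I_t -> 'I_n, injective f /\ forall e, e \in F -> f @: e \in G.

Definition Ffree (t n : nat) (F : {set {set 'I_t}}) (G : {set {set 'I_n}}) : Prop :=
  ~ contains F G.

Definition simplex (R : realType) (n : nat) : set ('I_n -> R) :=
  [set x | (forall i, 0 <= x i) /\ \sum_(i < n) x i = 1].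

Definition lagr_val (R : realType) (n : nat) (G : {set {set 'I_n}}) (x : 'I_n -> R) : R :=
  \sum_(e in G) \prod_(i in e) x i.

(* lambda(G) = max over the simplex (written as the supremum, which is attained). *)
Definition lagrangian (R : realType) (n : nat) (G : {set {set 'I_n}}) : R :=
  sup [set @lagr_val R n G x | x in @simplex R n].

Definition K3 (m : nat) : {set {set 'I_m}} := [set e : {set 'I_m} | #|e| == 3%N].

Definition lagr_density (R : realType) (t : nat) (F : {set {set 'I_t}}) : R :=
  sup [set y : R | exists (n : nat) (G : {set {set 'I_n}}),
         is3graph G /\ Ffree F G /\ y = 6%:R * @lagrangian R n G].

Definition lambda_perfect (R : realType) (t : nat) (H : {set {set 'I_t}}) : Prop :=
  @lagr_density R t H = 6%:R * @lagrangian R t.-1 (K3 t.-1).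

(* Main.v *)
Require Import Defs.
From mathcomp Require Import all_boot all_order all_algebra.
From mathcomp Require Import boolp classical_sets reals.
From mathcomp Require Import ring lra zify.
Set Implicit Arguments. Unset Strict Implicit. Unset Printing Implicit Defensive.
Import Order.TTheory GRing.Theory Num.Theory.
Local Open Scope ring_scope.


Section Split.
Variable R : realType.

Lemma liftK_pre n (B : {set 'I_n}) :
  lift ord_max @^-1: (lift ord_max @: B) = B.
Proof. by apply/setP => i; rewrite inE (mem_imset _ _ (@lift_inj _ ord_max)). Qed.

Lemma split_sum n k (F : {set 'I_n.+1} -> R) :
  \sum_(e : {set 'I_n.+1} | #|e| == k.+1) F e =
  \sum_(A : {set 'I_n} | #|A| == k.+1) F (lift ord_max @: A) +
  \sum_(B : {set 'I_n} | #|B| == k) F (ord_max |: (lift ord_max @: B)).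
Proof.
rewrite (bigID (fun e : {set 'I_n.+1} => ord_max \in e)) /= addrC.
congr (_ + _).
- rewrite (reindex_onto (fun A : {set 'I_n} => lift ord_max @: A)
     (fun e => lift ord_max @^-1: e)) /=.
    apply: eq_bigl => A; rewrite liftK_pre eqxx andbT.
    rewrite (card_imset _ (@lift_inj _ ord_max)).
    case: (#|A| == k.+1) => //=.
    by apply/imsetP => -[j _] /eqP; rewrite eq_liftF.
  move=> e /andP[_ He]; apply/setP => j; apply/imsetP/idP.
    by move=> [i]; rewrite inE => Hi ->.
  move=> Hj; have [i Hi|Hi] := unliftP ord_max j.
    by exists i => //; rewrite inE -Hi.
  by move: Hj He; rewrite Hi => ->.
- rewrite (reindex_onto (fun B : {set 'I_n} => ord_max |: (lift ord_max @: B))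
     (fun e => lift ord_max @^-1: e)) /=.
    apply: eq_bigl => B; rewrite setU11 andbT.
    have nB : ord_max \notin lift ord_max @: B.
      by apply/imsetP => -[j _] /eqP; rewrite eq_liftF.
    rewrite cardsU1 nB (card_imset _ (@lift_inj _ ord_max)) add1n eqSS.
    case: (#|B| == k) => //=.
    rewrite preimsetU liftK_pre.
    have -> : lift ord_max @^-1: [set ord_max] = finset.set0 :> {set 'I_n}.
      by apply/setP => i; rewrite !inE eq_sym eq_liftF.
    by rewrite finset.set0U eqxx.
  move=> e /andP[_ He]; apply/setP => j; rewrite in_setU1.
  have [->|nj] := eqVneq j ord_max; first by rewrite He.
  rewrite /=; apply/imsetP/idP.
    by move=> [i]; rewrite inE => Hi ->.
  move=> Hj; have [i Hi|Hi] := unliftP ord_max j.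
    by exists i => //; rewrite inE -Hi.
  by move: nj; rewrite Hi eqxx.
Qed.
End Split.


Section E.
Variable R : realType.

Definition E k n (x : 'I_n -> R) :=
  \sum_(A : {set 'I_n} | #|A| == k) \prod_(i in A) x i.

Lemma prod_lift n (A : {set 'I_n}) (x : 'I_n.+1 -> R) :
  \prod_(i in lift ord_max @: A) x i = \prod_(i in A) x (lift ord_max i).
Proof. by rewrite big_imset //; move=> i j _ _; apply: lift_inj. Qed.

Lemma prod_liftU n (A : {set 'I_n}) (x : 'I_n.+1 -> R) :
  \prod_(i in ord_max |: (lift ord_max @: A)) x i =
  x ord_max * \prod_(i in A) x (lift ord_max i).
Proof.
rewrite big_setU1 ?prod_lift //.
by apply/imsetP => -[j _] /eqP; rewrite eq_liftF.
Qed.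

Lemma E_rec n k (x : 'I_n.+1 -> R) :
  E k.+1 x = E k.+1 (x \o lift ord_max) + x ord_max * E k (x \o lift ord_max).
Proof.
rewrite /E split_sum mulr_sumr; congr (_ + _); apply: eq_bigr => A _.
  by rewrite prod_lift.
by rewrite prod_liftU.
Qed.

Lemma E0 n (x : 'I_n -> R) : E 0 x = 1.
Proof.
rewrite /E (big_pred1 finset.set0) ?big_set0 // => A.
by rewrite /= cards_eq0.
Qed.

Lemma E_nil k (x : 'I_0 -> R) : E k.+1 x = 0.
Proof.
rewrite /E big_pred0 // => A; apply/negbTE; rewrite neq_ltn; apply/orP; left.
by apply: leq_ltn_trans (max_card _) _; rewrite card_ord.
Qed.

Lemma sum_rec n (F : 'I_n.+1 -> R) :
  \sum_(i < n.+1) F i = \sum_(i < n) F (lift ord_max i) + F ord_max.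
Proof.
rewrite big_ord_recr /=; congr (_ + _); apply: eq_bigr => i _; congr F.
by apply: val_inj; rewrite /= /bump leqNgt ltn_ord.
Qed.

Definition pw n (x : 'I_n -> R) k := \sum_(i < n) x i ^+ k.

Lemma E_ident n (x : 'I_n -> R) :
  [/\ E 1%N x = pw x 1, 2 * E 2%N x = pw x 1 ^+ 2 - pw x 2 &
   6 * E 3%N x = pw x 1 ^+ 3 - 3 * pw x 1 * pw x 2 + 2 * pw x 3].
Proof.
elim: n x => [|n IH] x.
  by rewrite !E_nil /pw !big_ord0; split; ring.
have [h1 h2 h3] := IH (x \o lift ord_max).
rewrite !E_rec E0 /pw !sum_rec.
move: h1 h2 h3; rewrite /pw /=.
move: (E 1%N _) (E 2%N _) (E 3%N _) => e1 e2 e3 h1 h2 h3.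
move: (\sum_(i < n) _ ^+ 1) (\sum_(i < n) _ ^+ 2) (\sum_(i < n) _ ^+ 3) h1 h2 h3 => S P Q h1 h2 h3.
split.
- by rewrite h1; ring.
- have -> : e2 = (S ^+ 2 - P) / 2 by lra.
  by rewrite h1; field.
- have -> : e2 = (S ^+ 2 - P) / 2 by lra.
  have -> : e3 = (S ^+ 3 - 3 * S * P + 2 * Q) / 6 by lra.
  by field.
Qed.
End E.


Section UB.
Variable R : realType.

Lemma amgm3 (a b c : R) : 0 <= a -> 0 <= b -> 0 <= c ->
  27 * (a * b * c) <= (a + b + c) ^+ 3.
Proof.
move=> ha hb hc.
have -> : (a + b + c) ^+ 3 = 27 * (a * b * c) +
   ((a + b + c) * ((a - b) ^+ 2 + (b - c) ^+ 2 + (c - a) ^+ 2) / 2 +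
    3 * (a * (b - c) ^+ 2 + b * (c - a) ^+ 2 + c * (a - b) ^+ 2)) by field.
rewrite lerDl; apply: addr_ge0.
  apply: mulr_ge0; last lra.
  apply: mulr_ge0; first lra.
  by rewrite !addr_ge0 // sqr_ge0.
apply: mulr_ge0; first lra.
by rewrite !addr_ge0 // mulr_ge0 // sqr_ge0.
Qed.

Lemma le_sum1 n (x : 'I_n -> R) i : (forall j, 0 <= x j) -> x i <= pw x 1.
Proof.
move=> h; rewrite /pw (bigD1 i) //= expr1 lerDl.
by apply: sumr_ge0 => j _; rewrite expr1.
Qed.

Lemma E3_ub m (x : 'I_m -> R) : (3 <= m)%N -> (forall i, 0 <= x i) ->
  pw x 1 = 1 -> 6 * E 3%N x <= (m%:R - 1) * (m%:R - 2) / m%:R ^+ 2.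
Proof.
move=> hm hx hs; have [_ _ ->] := E_ident x; rewrite hs.
case: (ltngtP m 3) => [|hm4|em]; first by rewrite ltnNge hm.
-
  set mu := (m%:R : R)^-1.
  have hM : (4 : R) <= m%:R by rewrite (ler_nat R 4 m).
  have hM0 : (m%:R : R) != 0 by apply/eqP => h; rewrite h in hM; lra.
  have hmu : m%:R * mu = 1 by rewrite mulfV.
  have hmu0 : 0 <= mu by rewrite invr_ge0; lra.
  have hmu4 : mu <= 4^-1.
    by rewrite lef_pV2 ?posrE //; lra.
  have key : 0 <= \sum_(i < m) (x i - mu) ^+ 2 * (3 - 4 * mu - 2 * x i).
    apply: sumr_ge0 => i _; apply: mulr_ge0; first exact: sqr_ge0.
    have := le_sum1 i hx; rewrite hs; lra.
  have ex : \sum_(i < m) (x i - mu) ^+ 2 * (3 - 4 * mu - 2 * x i) =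
     (-2) * pw x 3 + 3 * pw x 2 + (6 * mu ^+ 2 - 6 * mu) * pw x 1
     + m%:R * (3 * mu ^+ 2 - 4 * mu ^+ 3).
    have -> : m%:R * (3 * mu ^+ 2 - 4 * mu ^+ 3) = \sum_(i < m) (3 * mu ^+ 2 - 4 * mu ^+ 3).
      by rewrite sumr_const card_ord mulr_natl.
    rewrite /pw !mulr_sumr -!big_split /=.
    by apply: eq_bigr => i _; ring.
  have e1 : m%:R * (3 * mu ^+ 2 - 4 * mu ^+ 3) = 3 * mu - 4 * mu ^+ 2.
    transitivity ((m%:R * mu) * (3 * mu - 4 * mu ^+ 2)); first by ring.
    by rewrite hmu mul1r.
  have -> : (m%:R - 1) * (m%:R - 2) / m%:R ^+ 2 = 1 - 3 * mu + 2 * mu ^+ 2.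
    by rewrite /mu; field.
  rewrite ex e1 hs in key; lra.
- subst m; rewrite /pw in hs *; rewrite !big_ord_recr !big_ord0 /= !add0r in hs *.
  rewrite !expr1 in hs.
  have ha := hx (widen_ord (leqnSn 2) (widen_ord (leqnSn 1) ord_max)).
  have hb := hx (widen_ord (leqnSn 2) ord_max).
  have hc := hx ord_max.
  move: ha hb hc hs.
  set a := x (widen_ord (leqnSn 2) (widen_ord (leqnSn 1) ord_max)).
  set b := x (widen_ord (leqnSn 2) ord_max).
  set c := x ord_max.
  move=> ha hb hc hs.
  have := amgm3 ha hb hc; rewrite hs.
  move=> h.
  have id : (a + b + c) ^+ 3 - 3 * (a + b + c) * (a ^+ 2 + b ^+ 2 + c ^+ 2)
    + 2 * (a ^+ 3 + b ^+ 3 + c ^+ 3) = 6 * (a * b * c) by ring.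
  rewrite hs in id; rewrite id.
  have -> : ((3%N%:R : R) - 1) * (3%:R - 2) / 3%:R ^+ 2 = 2 / 9 by field.
  lra.
Qed.
End UB.


Lemma numeric (R : realType) (M e0 u0 : R) : 3 <= M ->
  e0 = (M ^+ 2)^-1 -> u0 = (1 - e0) / M ->
  (M - 1) * (M - 2) / M ^+ 2 <
  6 * (M * (M - 1) * (M - 2) / 6 * u0 ^+ 3 + ((M - 1) * (M - 2) / 2 + 1) * (e0 * u0 ^+ 2)).
Proof.
move=> hM -> ->; set e := (M ^+ 2)^-1; set u := (1 - e) / M.
have M0 : M != 0 by apply/eqP => h; rewrite h in hM; lra.
have hMe : M ^+ 2 * e = 1 by rewrite mulfV // expf_neq0.
have ep : 0 < e by rewrite invr_gt0; nra.
have e9 : e <= 9^-1 by rewrite lef_pV2 ?posrE; nra.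
set C3 := M * (M - 1) * (M - 2) / 6.
have id : 6 * (C3 * u ^+ 3 + ((M - 1) * (M - 2) / 2 + 1) * (e * u ^+ 2))
   - (M - 1) * (M - 2) / M ^+ 2
  = 6 / M ^+ 3 * (e * (M * (1 - e) ^+ 2 - C3 * e * (3 - 2 * e))).
  rewrite /C3 /u.
  have -> : (M - 1) * (M - 2) / M ^+ 2 = (M - 1) * (M - 2) / M ^+ 2 * (1 - e + e) by ring.
  field; exact: M0.
have C3e : C3 * e = (M - 1) * (M - 2) / (6 * M).
  rewrite /C3 /e; field; exact: M0.
have C3e' : C3 * e <= M / 6.
  rewrite C3e ler_pdivrMr; last nra.
  have -> : M / 6 * (6 * M) = M * M by field.
  nra.
have : 0 < e * (M * (1 - e) ^+ 2 - C3 * e * (3 - 2 * e)).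
  apply: mulr_gt0 => //.
  have h1 : M * (1 - 2 * e) <= M * (1 - e) ^+ 2 by nra.
  have h2 : C3 * e * (3 - 2 * e) <= M / 6 * 3.
    have : 0 <= C3 * e by rewrite C3e; apply: divr_ge0; nra.
    nra.
  nra.
move=> hpos.
have : 0 < 6 / M ^+ 3 * (e * (M * (1 - e) ^+ 2 - C3 * e * (3 - 2 * e))).
  apply: mulr_gt0 => //; apply: divr_gt0 => //; apply: exprn_gt0; lra.
by move=> h; rewrite -subr_gt0 id.
Qed.


Section Constr.
Variable R : realType.
Variable q : nat.

Definition B0 : {set 'I_q.+3} := [set ord0; ord_max].
Definition L : {set {set 'I_q.+3}} :=
  B0 |: ((fun A : {set 'I_q.+2} => lift ord_max @: A) @: [set A : {set 'I_q.+2} | #|A| == 2%N]).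
Definition G : {set {set 'I_q.+4}} :=
  [set e : {set 'I_q.+4} | (#|e| == 3%N) && ((ord_max \notin e) || (lift ord_max @^-1: e \in L))].

Lemma notin_lift n (A : {set 'I_n}) : ord_max \notin lift ord_max @: A.
Proof. by apply/imsetP => -[j _] /eqP; rewrite eq_liftF. Qed.

Lemma preU n (B : {set 'I_n}) :
  lift ord_max @^-1: (ord_max |: (lift ord_max @: B)) = B.
Proof.
apply/setP => i; rewrite !inE eq_sym eq_liftF /=.
by rewrite (mem_imset _ _ (@lift_inj _ ord_max)).
Qed.

Lemma L_card2 B : B \in L -> #|B| = 2%N.
Proof.
rewrite in_setU1 => /orP[/eqP ->|/imsetP[A]].
  by rewrite /B0 cards2.
by rewrite inE => /eqP hA ->; rewrite (card_imset _ (@lift_inj _ ord_max)).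
Qed.

Lemma card_L : #|L| = ('C(q.+2, 2) + 1)%N.
Proof.
rewrite cardsU1 addnC; congr (_ + _)%N.
  rewrite (card_imset _ (imset_inj (@lift_inj _ ord_max))).
  by rewrite card_draws card_ord.
apply/eqP; rewrite eqb1; apply/imsetP => -[A _] hA.
have : ord_max \in B0 by rewrite /B0 !inE eqxx orbT.
by rewrite hA (negbTE (notin_lift _)).
Qed.

Lemma sum_const_card n k (c : R) :
  \sum_(A : {set 'I_n} | #|A| == k) c = c *+ 'C(n, k).
Proof.
have -> : 'C(n, k) = #|[set A : {set 'I_n} | #|A| == k]| by rewrite card_draws card_ord.
rewrite -sumr_const.
by apply: eq_bigl => A; rewrite inE.
Qed.

Lemma lagrG (x : 'I_q.+4 -> R) u c :
  (forall i, x (lift ord_max i) = u) -> x ord_max = c ->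
  lagr_val G x = 'C(q.+3, 3)%:R * u ^+ 3 + #|L|%:R * (c * u ^+ 2).
Proof.
move=> hu hc; rewrite /lagr_val.
have -> : \sum_(e in G) \prod_(i in e) x i =
  \sum_(e : {set 'I_q.+4} | #|e| == 3%N)
     (if (ord_max \notin e) || (lift ord_max @^-1: e \in L)
      then \prod_(i in e) x i else 0).
  by rewrite -big_mkcondr; apply: eq_bigl => e; rewrite inE.
rewrite split_sum; congr (_ + _).
  rewrite (eq_bigr (fun _ => u ^+ 3)).
    by rewrite sum_const_card mulr_natl.
  move=> A /eqP hA; rewrite notin_lift /= prod_lift.
  by rewrite (eq_bigr (fun _ => u)) ?prodr_const ?hA // => i _; rewrite hu.
rewrite (eq_bigr (fun B => if B \in L then c * u ^+ 2 else 0)); last first.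
  move=> B /eqP hB; rewrite preU setU11 /=.
  case: ifP => // _; rewrite prod_liftU hc.
  by rewrite (eq_bigr (fun _ => u)) ?prodr_const ?hB // => i _; rewrite hu.
rewrite -big_mkcondr /=.
transitivity (\sum_(B in L) c * u ^+ 2); last by rewrite sumr_const mulr_natl.
apply: eq_bigl => B; apply/andP/idP => [[]//|hB]; split => //.
by rewrite L_card2.
Qed.
End Constr.


Section Final.
Variable R : realType.
Local Open Scope classical_set_scope.

Lemma sup_le_gen (S : set R) c : 0 <= c -> (forall y, S y -> y <= c) -> sup S <= c.
Proof.
move=> c0 h; have [ne|e] := pselect (S !=set0).
  by apply: ge_sup => // y /h.
by rewrite (proj1 (nonemptyPn _) e) sup0.
Qed.

Lemma lagr_val_ub n (G : {set {set 'I_n}}) (x : 'I_n -> R) :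
  is3graph G -> simplex x -> 6 * lagr_val G x <= 1.
Proof.
move=> h3 [hx hs].
have hs' : pw x 1 = 1 by rewrite /pw -hs; apply: eq_bigr => i _; rewrite expr1.
have le1 : lagr_val G x <= E 3%N x.
  rewrite /lagr_val /E (big_mkcond (fun e => e \in G)) [in X in _ <= X]big_mkcond /=.
  apply: ler_sum => e _; case: ifP => eG.
    by rewrite (h3 _ eG) eqxx.
  case: ifP => // _; apply: prodr_ge0 => i _; exact: hx.
have [_ _ id] := E_ident x.
have p3 : pw x 3 <= pw x 2.
  apply: ler_sum => i _; have := le_sum1 i hx; rewrite hs' => h1.
  have := hx i; nra.
have p2 : 0 <= pw x 2 by apply: sumr_ge0 => i _; exact: sqr_ge0.
rewrite hs' in id; nra.
Qed.

Lemma lagrangian_ub n (G : {set {set 'I_n}}) : is3graph G -> 6 * lagrangian R G <= 1.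
Proof.
move=> h3; suff : lagrangian R G <= 6^-1 by lra.
apply: sup_le_gen => [|y [x hx <-]]; first lra.
have := lagr_val_ub h3 hx; lra.
Qed.

Lemma lagr_val_le_lagrangian n (G : {set {set 'I_n}}) x :
  is3graph G -> simplex x -> lagr_val G x <= lagrangian R G.
Proof.
move=> h3 hx; apply: ub_le_sup; last by exists x.
exists (6^-1) => y [z hz <-].
have := lagr_val_ub h3 hz; lra.
Qed.

Lemma lagrangian_le_density t (H : {set {set 'I_t}}) n (G : {set {set 'I_n}}) :
  is3graph G -> Ffree H G -> 6 * lagrangian R G <= lagr_density R H.
Proof.
move=> h3 hf; apply: ub_le_sup; last by exists n, G.
exists 1 => y [n' [G' [h3' [_ ->]]]]; exact: lagrangian_ub.
Qed.

Lemma K3_ub m : (3 <= m)%N ->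
  6 * lagrangian R (K3 m) <= (m%:R - 1) * (m%:R - 2) / m%:R ^+ 2.
Proof.
move=> hm; have hM : (3 : R) <= m%:R by rewrite (ler_nat R 3 m).
set c := (m%:R - 1) * (m%:R - 2) / m%:R ^+ 2.
have c0 : 0 <= c.
  apply: divr_ge0; last exact: sqr_ge0.
  apply: mulr_ge0; lra.
suff : lagrangian R (K3 m) <= c / 6 by lra.
apply: sup_le_gen; first lra.
move=> y [x [hx hs] <-]; suff : 6 * lagr_val (K3 m) x <= c by lra.
have -> : lagr_val (K3 m) x = E 3%N x.
  by rewrite /lagr_val /E; apply: eq_bigl => e; rewrite inE.
apply: E3_ub => //.
Qed.

End Final.


Lemma mybin3 q : ('C(q.+3, 3) * 6 = q.+3 * (q.+2 * q.+1))%N.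
Proof. by have := bin_ffact q.+3 3; rewrite !ffactnS ffactn0 /= muln1. Qed.

Lemma mybin2 q : ('C(q.+2, 2) * 2 = q.+2 * q.+1)%N.
Proof. by have := bin_ffact q.+2 2; rewrite !ffactnS ffactn0 /= muln1. Qed.

Unset Implicit Arguments.
Theorem mainTheorem7 (R : realType) (t : nat) (H : {set {set 'I_t}}) :
  (4 <= t)%N -> is3graph H ->
  ('C(t.-1, 3) + 'C(t.-2, 2) + 2 <= #|H|)%N ->
  ~ @lambda_perfect R t H.
Proof.
case: t H => [|[|[|[|q]]]] H //= _ h3 hcard hperf.
set M : R := (q.+3)%:R.
have hM : 3 <= M by rewrite /M (ler_nat R 3 q.+3).
have M0 : M != 0 by apply/eqP => h; rewrite h in hM; lra.
set e : R := (M ^+ 2)^-1.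
set u : R := (1 - e) / M.
have ep : 0 < e by rewrite invr_gt0; nra.
have e1 : e <= 1 by rewrite /e invr_le1 ?unitfE ?expf_neq0 //; nra.
have u0 : 0 <= u by apply: divr_ge0; lra.
set x : 'I_q.+4 -> R := fun i => if i == ord_max then e else u.
have xl : forall i, x (lift ord_max i) = u by move=> i; rewrite /x eq_sym eq_liftF.
have xm : x ord_max = e by rewrite /x eqxx.
have hx : simplex x.
  split; first by move=> i; rewrite /x; case: ifP => _; lra.
  rewrite sum_rec xm (eq_bigr (fun _ => u)) ?sumr_const ?card_ord //.
  rewrite -mulr_natl /u -/M mulrCA mulfV // mulr1; ring.
have cG : #|G q| = ('C(q.+3, 3) + 'C(q.+2, 2) + 1)%N.
  have := @lagrG R q (fun _ => 1) 1 1 (fun _ => erefl) erefl.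
  rewrite /lagr_val (eq_bigr (fun _ => 1)); last by move=> e' _; rewrite big1.
  rewrite sumr_const expr1n !mulr1 card_L expr1n !mulr1 -natrD => /eqP.
  by rewrite eqr_nat addnA => /eqP.
have g3 : is3graph (G q) by move=> e'; rewrite inE => /andP[/eqP].
have gfree : Ffree H (G q).
  move=> [f [finj hf]].
  have : (#|H| <= #|G q|)%N.
    rewrite -(card_imset _ (imset_inj finj)).
    apply: subset_leq_card; apply/fintype.subsetP => e' /imsetP[e'' he ->]; exact: hf.
  rewrite cG => h; move: (leq_trans hcard h); by rewrite leq_add2l.
have h1 := lagrangian_le_density R g3 gfree.
have h2 := lagr_val_le_lagrangian g3 hx.
have h4 := @K3_ub R q.+3 isT.
rewrite (lagrG xl xm) card_L in h2.
move: hperf; rewrite /lambda_perfect /= => hp.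
rewrite hp in h1.
have c3 : ('C(q.+3, 3))%:R = M * (M - 1) * (M - 2) / 6 :> R.
  have h6 : (6 : R) != 0 by rewrite pnatr_eq0.
  apply: (mulIf h6); rewrite -natrM mybin3 !natrM /M -[q.+3]/(q.+2.+1) -[q.+2]/(q.+1.+1) !mulrSr.
  by field.
have c2 : ('C(q.+2, 2) + 1)%:R = (M - 1) * (M - 2) / 2 + 1 :> R.
  rewrite natrD; congr (_ + _).
  have h6 : (2 : R) != 0 by rewrite pnatr_eq0.
  apply: (mulIf h6).
  rewrite -natrM mybin2 !natrM /M -[q.+3]/(q.+2.+1) -[q.+2]/(q.+1.+1) !mulrSr.
  by field.
rewrite c3 c2 in h2.
have := numeric hM (erefl e) (erefl u).
rewrite -/M in h4.
clearbody x u e M. lra.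
Qed.
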